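(* Every group $G\subset \mathrm{Diff}^1_+([0,1])$ without hyperbolic fixed points is without linked fixed points.
   Context: $G\subset \mathrm{Diff}^1_+([0,1])$ is without hyperbolic fixed points if for every $g\in G$ and every $x\in\mathrm{Fix}(g)$ one has $Dg(x)=1$. For a group $G$ of homeomorphisms of $[0,1]$, a pair of successive fixed points of $G$ is a pair $\{a,b\}$, $a<b$, such that $(a,b)$ is a connected component of $[0,1]\setminus \mathrm{Fix}(g)$ for some $g\in G$. Two pairs $\{a,b\}$ and $\{c,d\}$ are linked if $(a,b)\cap\{c,d\}$ or $(c,d)\cap\{a,b\}$ consists of exactly one point. $G$ is without linked fixed points if no two pairs of successive fixed points of $G$ are linked. *)

(* Defs.v *)
From Stdlib Require Import Reals.
Open Scope R_scope.

Definition I01 (x : R) : Prop := 0 <= x <= 1.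

(* One-sided-at-the-endpoints derivative on [0,1]:
   f has derivative l at x within [0,1]. *)
Definition has_deriv01 (f : R -> R) (x l : R) : Prop :=
  limit1_in (fun y => (f y - f x) / (y - x))
            (fun y => I01 y /\ y <> x) l x.

Definition C1_01 (f : R -> R) : Prop :=
  exists f' : R -> R,
    (forall x, I01 x -> has_deriv01 f x (f' x)) /\
    (forall x, I01 x -> limit1_in f' I01 (f' x) x).

Definition Diff1plus (f : R -> R) : Prop :=
  (forall x, I01 x -> I01 (f x)) /\
  (exists g : R -> R,
     (forall x, I01 x -> I01 (g x)) /\
     (forall x, I01 x -> g (f x) = x) /\
     (forall x, I01 x -> f (g x) = x) /\
     C1_01 f /\ C1_01 g) /\
  (forall x y, I01 x -> I01 y -> x < y -> f x < f y).

(* G (a set of maps R -> R, considered through their restrictions to [0,1])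
   is a group under composition, equality being equality on [0,1]. *)
Definition is_group01 (G : (R -> R) -> Prop) : Prop :=
  (exists e, G e /\ forall x, I01 x -> e x = x) /\
  (forall f g, G f -> G g -> exists h, G h /\ forall x, I01 x -> h x = f (g x)) /\
  (forall f, G f -> exists h, G h /\ forall x, I01 x -> h (f x) = x /\ f (h x) = x).

Definition no_hyperbolic_fixed (G : (R -> R) -> Prop) : Prop :=
  forall g x, G g -> I01 x -> g x = x -> has_deriv01 g x 1.

(* {a,b}, a<b, is a pair of successive fixed points of G: (a,b) is a connected
   component of [0,1] \ Fix(g) for some g in G, i.e. a, b in [0,1] are fixed by g
   and g has no fixed point in (a,b). *)
Definition succ_fixed (G : (R -> R) -> Prop) (a b : R) : Prop :=
  exists g, G g /\ 0 <= a /\ a < b /\ b <= 1 /\ g a = a /\ g b = b /\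
    (forall x, a < x < b -> g x <> x).

Definition exactly_one_in (a b c d : R) : Prop :=
  (a < c < b /\ ~ (a < d < b)) \/ (~ (a < c < b) /\ a < d < b).

Definition linked (a b c d : R) : Prop :=
  exactly_one_in a b c d \/ exactly_one_in c d a b.

Definition no_linked_fixed (G : (R -> R) -> Prop) : Prop :=
  forall a b c d, succ_fixed G a b -> succ_fixed G c d -> ~ linked a b c d.

(* Main.v *)
Require Import Defs.
From Stdlib Require Import Reals Lra Lia Classical List ZArith.
Import ListNotations.
Open Scope R_scope.

Lemma lim_unfold (f : R -> R) (D : R -> Prop) (l x : R) :
  limit1_in f D l x ->
  forall eps, 0 < eps -> exists alp, 0 < alp /\
    forall y, D y -> Rabs (y - x) < alp -> Rabs (f y - l) < eps.
Proof.
  intros H eps He. destruct (H eps He) as [alp [Ha Hb]].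
  exists alp; split; [lra|]. intros y Dy Hy. apply (Hb y). split; auto.
Qed.

Definition cont01 (f : R -> R) : Prop :=
  forall x, I01 x -> forall eps, 0 < eps -> exists d, 0 < d /\
    forall y, I01 y -> Rabs (y - x) < d -> Rabs (f y - f x) < eps.

Lemma deriv_cont_pt f x l : has_deriv01 f x l ->
  forall eps, 0 < eps -> exists d, 0 < d /\
    forall y, I01 y -> Rabs (y - x) < d -> Rabs (f y - f x) < eps.
Proof.
  intros H eps He. destruct (lim_unfold _ _ _ _ H 1 ltac:(lra)) as [alp [Ha Hb]].
  exists (Rmin alp (eps / (Rabs l + 1))). split.
  { apply Rmin_pos; auto. apply Rdiv_lt_0_compat; auto. pose proof (Rabs_pos l); lra. }
  intros y Iy Hy.
  destruct (Req_dec y x) as [->|Hne].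
  { replace (f x - f x) with 0 by ring. rewrite Rabs_R0; auto. }
  assert (Hy1 : Rabs (y - x) < alp) by (eapply Rlt_le_trans; [apply Hy| apply Rmin_l]).
  assert (Hy2 : Rabs (y - x) < eps / (Rabs l + 1)) by (eapply Rlt_le_trans; [apply Hy| apply Rmin_r]).
  specialize (Hb y (conj Iy Hne) Hy1).
  set (q := (f y - f x) / (y - x)) in *.
  assert (Eq : f y - f x = q * (y - x)).
  { unfold q. field. intro; apply Hne; lra. }
  rewrite Eq, Rabs_mult.
  assert (Hq : Rabs q < Rabs l + 1).
  { pose proof (Rabs_triang (q - l) l). replace (q - l + l) with q in H0 by ring. lra. }
  assert (Hpos : 0 < Rabs l + 1) by (pose proof (Rabs_pos l); lra).
  assert (Hyx : 0 < Rabs (y - x)) by (apply Rabs_pos_lt; lra).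
  apply Rlt_le_trans with ((Rabs l + 1) * Rabs (y - x)).
  { apply Rmult_lt_compat_r; auto. }
  apply Rle_trans with ((Rabs l + 1) * (eps / (Rabs l + 1))).
  { apply Rmult_le_compat_l; lra. }
  right; field; lra.
Qed.

Lemma C1_cont f : C1_01 f -> cont01 f.
Proof.
  intros [f' [Hd Hc]] x Ix. apply (deriv_cont_pt f x (f' x)). auto.
Qed.

Definition cl (x : R) : R := Rmax 0 (Rmin 1 x).

Lemma cl_I01 x : I01 (cl x).
Proof. unfold cl, I01, Rmax, Rmin. repeat destruct Rle_dec; lra. Qed.

Lemma cl_id x : I01 x -> cl x = x.
Proof. unfold cl, I01, Rmax, Rmin. intros. repeat destruct Rle_dec; lra. Qed.

Lemma cl_lip x y : Rabs (cl x - cl y) <= Rabs (x - y).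
Proof.
  unfold cl, Rmax, Rmin. unfold Rabs.
  repeat (destruct Rle_dec); repeat destruct Rcase_abs; lra.
Qed.

Lemma cont_pt_intro f x :
  (forall eps, 0 < eps -> exists d, 0 < d /\ forall y, Rabs (y - x) < d -> Rabs (f y - f x) < eps) ->
  continuity_pt f x.
Proof.
  intros H. unfold continuity_pt, continue_in, limit1_in, limit_in. simpl.
  intros eps He. destruct (H eps He) as [d [Hd Hy]]. exists d. split; [lra|].
  intros y [_ Hy2]. unfold R_dist in *. apply Hy. auto.
Qed.

Lemma cont_clamp f : cont01 f -> forall x, continuity_pt (fun y => f (cl y)) x.
Proof.
  intros Hf x. apply cont_pt_intro. intros eps He.
  destruct (Hf (cl x) (cl_I01 x) eps He) as [d [Hd Hy]].
  exists d; split; auto. intros y Hyx. apply Hy. apply cl_I01.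
  eapply Rle_lt_trans; [apply cl_lip| auto].
Qed.

Lemma lim_cont01 f' : (forall x, I01 x -> limit1_in f' I01 (f' x) x) -> cont01 f'.
Proof.
  intros H x Ix eps He. destruct (lim_unfold _ _ _ _ (H x Ix) eps He) as [a [Ha Hb]].
  exists a; split; auto.
Qed.

Lemma MVT01 f f' : (forall x, I01 x -> has_deriv01 f x (f' x)) ->
  forall s t, I01 s -> I01 t -> s < t ->
  exists z, s <= z <= t /\ f t - f s = f' z * (t - s).
Proof.
  intros Hd s t Is It Hst.
  assert (Hc : cont01 f).
  { intros x Ix. apply (deriv_cont_pt f x (f' x)). auto. }
  set (fc := fun y => f (cl y)).
  assert (Hder : forall c, s < c < t -> derivable_pt_lim fc c (f' c)).
  { intros c Hc2. unfold I01 in *.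
    assert (Ic : I01 c) by (unfold I01; lra).
    intros eps He. destruct (lim_unfold _ _ _ _ (Hd c Ic) eps He) as [a [Ha Hb]].
    assert (Hpos : 0 < Rmin a (Rmin c (1 - c))).
    { apply Rmin_pos; auto. apply Rmin_pos; lra. }
    exists (mkposreal _ Hpos). intros h Hh0 Hh. simpl in Hh.
    pose proof (Rmin_l a (Rmin c (1 - c))). pose proof (Rmin_r a (Rmin c (1 - c))).
    pose proof (Rmin_l c (1 - c)). pose proof (Rmin_r c (1 - c)).
    assert (Hab : Rabs h < c /\ Rabs h < 1 - c) by lra.
    assert (Hh2 : -c < h < 1 - c).
    { destruct Hab as [Ha1 Ha2]. unfold Rabs in Ha1, Ha2. destruct Rcase_abs; lra. }
    assert (Iy : I01 (c + h)) by (unfold I01; lra).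
    unfold fc. rewrite (cl_id (c+h) Iy), (cl_id c Ic).
    replace h with ((c + h) - c) at 2 by ring.
    apply Hb. split; auto. intro E; apply Hh0; lra.
    replace (c + h - c) with h by ring. lra. }
  set (pr1 := fun c (P : s < c < t) => exist (fun l => derivable_pt_lim fc c l) (f' c) (Hder c P)).
  set (pr2 := fun c (P : s < c < t) => exist (fun l => derivable_pt_lim id c l) 1 (derivable_pt_lim_id c)).
  destruct (MVT fc id s t pr1 pr2 Hst) as [z [P Hz]].
  { intros c _. apply cont_clamp; auto. }
  { intros c _. apply derivable_continuous_pt. exists 1. apply derivable_pt_lim_id. }
  unfold derive_pt, pr1, pr2 in Hz. simpl in Hz. unfold fc, id in Hz.
  rewrite (cl_id s Is), (cl_id t It) in Hz.
  exists z. split; [lra|]. lra.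
Qed.

Lemma cont01_abs g : cont01 g -> cont01 (fun x => Rabs (g x)).
Proof.
  intros Hg x Ix eps He. destruct (Hg x Ix eps He) as [d [Hd Hy]].
  exists d; split; auto. intros y Iy Hyx.
  eapply Rle_lt_trans; [apply Rabs_triang_inv2|]. auto.
Qed.

Lemma bound01 g : cont01 g -> exists M, 0 < M /\ forall x, I01 x -> Rabs (g x) <= M.
Proof.
  intros Hg.
  pose proof (cont_clamp _ (cont01_abs g Hg)) as Hc.
  destruct (continuity_ab_maj (fun y => Rabs (g (cl y))) 0 1 ltac:(lra) (fun c _ => Hc c))
    as [Mx [HM _]].
  exists (Rabs (g (cl Mx)) + 1). split. pose proof (Rabs_pos (g (cl Mx))); lra.
  intros x Ix. specialize (HM x Ix). simpl in HM. rewrite (cl_id x Ix) in HM. lra.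
Qed.

Lemma unif01 g : cont01 g -> forall eps, 0 < eps -> exists d, 0 < d /\
  forall x y, I01 x -> I01 y -> Rabs (x - y) < d -> Rabs (g x - g y) < eps.
Proof.
  intros Hg eps He.
  pose proof (Heine (fun y => g (cl y)) (fun c => 0 <= c <= 1) (compact_P3 0 1)
     (fun x _ => cont_clamp g Hg x)) as HU.
  destruct (HU (mkposreal eps He)) as [d Hd].
  exists d. split. apply cond_pos.
  intros x y Ix Iy Hxy. specialize (Hd x y Ix Iy Hxy). simpl in Hd.
  rewrite (cl_id x Ix), (cl_id y Iy) in Hd. auto.
Qed.

Lemma letter (l : R -> R) : Diff1plus l -> exists L eta, 1 <= L /\ 0 < eta /\
  forall u v u' v', I01 u -> I01 v -> I01 u' -> I01 v' -> u < v -> u' < v' ->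
    u' <= u -> v <= v' ->
    (l v - l u) / (v - u) <= L * ((l v' - l u') / (v' - u')) /\
    (v' - u' <= eta -> (l v - l u) / (v - u) <= 3/2 * ((l v' - l u') / (v' - u'))).
Proof.
  intros [Hpres [[k [Hk1 [Hkl [Hlk [Cl Ck]]]]] Hmono]].
  destruct Cl as [l' [Hdl Hcl]]. destruct Ck as [k' [Hdk Hck]].
  destruct (bound01 l' (lim_cont01 l' Hcl)) as [M1 [HM1 HB1]].
  destruct (bound01 k' (lim_cont01 k' Hck)) as [M2 [HM2 HB2]].
  assert (Hq : forall s t, I01 s -> I01 t -> s < t ->
     1 / M2 <= (l t - l s) / (t - s) <= M1).
  { intros s t Is It Hst. pose proof (Hmono s t Is It Hst) as Hl.
    destruct (MVT01 l l' Hdl s t Is It Hst) as [z [Hz Ez]].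
    assert (Iz : I01 z) by (unfold I01 in *; lra).
    destruct (MVT01 k k' Hdk (l s) (l t) (Hpres s Is) (Hpres t It) Hl) as [z2 [Hz2 Ez2]].
    assert (Iz2 : I01 z2) by (unfold I01 in *; pose proof (Hpres s Is); pose proof (Hpres t It); unfold I01 in *; lra).
    rewrite Hkl in Ez2 by auto. rewrite Hkl in Ez2 by auto.
    pose proof (HB1 z Iz) as B1. pose proof (HB2 z2 Iz2) as B2.
    assert (Ql : (l t - l s) / (t - s) = l' z) by (rewrite Ez; field; lra).
    rewrite Ql. split.
    - apply Rle_trans with ((l t - l s) / (t - s)); [|rewrite Ql; lra].
      assert (k' z2 <= M2) by (pose proof (Rle_abs (k' z2)); lra).
      assert (t - s <= M2 * (l t - l s)).
      { rewrite Ez2. apply Rmult_le_compat_r; lra. }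
      unfold Rdiv. rewrite Rmult_1_l.
      apply Rmult_le_reg_l with M2; auto.
      rewrite <- Rinv_r_sym by lra.
      apply Rmult_le_reg_r with (t - s); [lra|].
      field_simplify; lra.
    - pose proof (Rle_abs (l' z)); lra. }
  destruct (unif01 l' (lim_cont01 l' Hcl) (1 / (2 * M2))) as [d [Hd Hud]].
  { apply Rdiv_lt_0_compat; lra. }
  exists (Rmax 1 (M1 * M2)), (d / 2). split; [apply Rmax_l|]. split; [lra|].
  intros u v u' v' Iu Iv Iu' Iv' Huv Huv' H1 H2.
  pose proof (Hq u v Iu Iv Huv) as [Qa Qb].
  pose proof (Hq u' v' Iu' Iv' Huv') as [Qa' Qb'].
  set (q := (l v - l u) / (v - u)) in *. set (q' := (l v' - l u') / (v' - u')) in *.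
  assert (Hq'pos : 0 < q').
  { eapply Rlt_le_trans; [|apply Qa']. apply Rdiv_lt_0_compat; lra. }
  split.
  - apply Rle_trans with (M1 * M2 * q').
    + apply Rle_trans with M1; auto.
      assert (M2 * q' >= 1).
      { apply Rle_ge. apply Rmult_le_reg_l with (/ M2). apply Rinv_0_lt_compat; lra.
        rewrite <- Rmult_assoc, Rinv_l, Rmult_1_l by lra. unfold Rdiv in Qa'. lra. }
      rewrite Rmult_assoc. rewrite <- (Rmult_1_r M1) at 1.
      apply Rmult_le_compat_l; lra.
    + apply Rmult_le_compat_r; [lra| apply Rmax_r].
  - intros Heta.
    destruct (MVT01 l l' Hdl u v Iu Iv Huv) as [z [Hz Ez]].
    destruct (MVT01 l l' Hdl u' v' Iu' Iv' Huv') as [z' [Hz' Ez']].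
    assert (Eq : q = l' z) by (unfold q; rewrite Ez; field; lra).
    assert (Eq' : q' = l' z') by (unfold q'; rewrite Ez'; field; lra).
    assert (Iz : I01 z) by (unfold I01 in *; lra).
    assert (Iz' : I01 z') by (unfold I01 in *; lra).
    assert (Hzz : Rabs (z - z') < d).
    { unfold Rabs; destruct Rcase_abs; lra. }
    specialize (Hud z z' Iz Iz' Hzz).
    rewrite <- Eq, <- Eq' in Hud.
    assert (q - q' < 1 / (2 * M2)) by (pose proof (Rle_abs (q - q')); lra).
    assert (1 / (2 * M2) <= q' / 2).
    { unfold Rdiv in *. rewrite Rinv_mult by lra. rewrite Rmult_1_l in *. lra. }
    lra.
Qed.

Fixpoint iter (n : nat) (g : R -> R) (x : R) : R :=
  match n with O => x | S n => g (iter n g x) end.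

Lemma D_pres g : Diff1plus g -> forall x, I01 x -> I01 (g x).
Proof. intros [H _]; exact H. Qed.
Lemma D_mono g : Diff1plus g -> forall x y, I01 x -> I01 y -> x < y -> g x < g y.
Proof. intros [_ [_ H]]; exact H. Qed.
Lemma D_mono_le g : Diff1plus g -> forall x y, I01 x -> I01 y -> x <= y -> g x <= g y.
Proof. intros Hg x y Ix Iy [H|H]. left; apply D_mono; auto. subst; lra. Qed.
Lemma D_cont g : Diff1plus g -> cont01 g.
Proof. intros [_ [[k [_ [_ [_ [C _]]]]] _]]. apply C1_cont; auto. Qed.

Lemma iter_I01 g n x : Diff1plus g -> I01 x -> I01 (iter n g x).
Proof. intros Hg Ix; induction n; simpl; auto. apply D_pres; auto. Qed.

Lemma iter_G (G : (R -> R) -> Prop) g n : is_group01 G -> G g -> Diff1plus g ->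
  exists h, G h /\ forall x, I01 x -> h x = iter n g x.
Proof.
  intros [[e [Ge He]] [Hc _]] Gg Dg. induction n as [|n [h [Gh Hh]]].
  - exists e; split; auto.
  - destruct (Hc g h Gg Gh) as [h' [Gh' Hh']]. exists h'; split; auto.
    intros x Ix. rewrite Hh', Hh; auto.
Qed.

Lemma Tarski (phi : R -> R) u v : u <= v ->
  (forall x, u <= x <= v -> u <= phi x <= v) ->
  (forall x y, u <= x -> x <= y -> y <= v -> phi x <= phi y) ->
  exists p, u <= p <= v /\ phi p = p.
Proof.
  intros Huv Hmap Hmon.
  set (E := fun x => u <= x <= v /\ x <= phi x).
  assert (Hb : bound E) by (exists v; intros x [Hx _]; lra).
  assert (He : exists x, E x) by (exists u; split; [lra| apply Hmap; lra]).
  destruct (completeness E Hb He) as [p [Hub Hlub]].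
  assert (Hup : u <= p) by (apply Hub; split; [lra| apply Hmap; lra]).
  assert (Hpv : p <= v) by (apply Hlub; intros x [Hx _]; lra).
  assert (H1 : p <= phi p).
  { apply Hlub. intros x [Hx Hx2]. apply Rle_trans with (phi x); auto.
    apply Hmon; try lra. apply Hub; split; auto. }
  assert (H2 : phi p <= p).
  { apply Hub. split. apply Hmap; lra. apply Hmon; try lra; apply Hmap; lra. }
  exists p; split; [lra|lra].
Qed.

Lemma inv_push (f h : R -> R) x : Diff1plus h -> I01 x -> I01 (f x) ->
  h (f x) = x -> (f x > x -> h x < x) /\ (f x < x -> h x > x).
Proof.
  intros Dh Ix Ifx E. split; intros H.
  - pose proof (D_mono h Dh x (f x) Ix Ifx H). lra.
  - pose proof (D_mono h Dh (f x) x Ifx Ix H). lra.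
Qed.

Lemma sign_const (G : (R -> R) -> Prop) f a b : is_group01 G ->
  (forall g, G g -> Diff1plus g) -> G f -> 0 <= a -> a < b -> b <= 1 ->
  (forall x, a < x < b -> f x <> x) ->
  (forall x, a < x < b -> f x > x) \/ (forall x, a < x < b -> f x < x).
Proof.
  intros HG HD Gf Ha Hab Hb Hnf.
  destruct HG as [_ [_ Hinv]]. destruct (Hinv f Gf) as [h [Gh Hh]].
  pose proof (HD f Gf) as Df. pose proof (HD h Gh) as Dh.
  assert (Nomix : forall x y, a < x < b -> a < y < b -> f x > x -> f y < y -> False).
  { intros x y Hx Hy Hfx Hfy.
    assert (Ix : I01 x) by (unfold I01; lra). assert (Iy : I01 y) by (unfold I01; lra).
    destruct (Rlt_or_le x y) as [Hxy|Hyx].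
    - destruct (Tarski f x y) as [p [Hp Ep]]; [lra| | |].
      + intros z Hz. assert (Iz : I01 z) by (unfold I01; lra).
        split.
        * apply Rle_trans with (f x); [lra|]. apply D_mono_le; auto; lra.
        * apply Rle_trans with (f y); [|lra]. apply D_mono_le; auto; lra.
      + intros z1 z2 H1 H2 H3. apply D_mono_le; auto; unfold I01; lra.
      + apply (Hnf p); auto; lra.
    - destruct (Req_dec x y) as [->|Hne]; [lra|].
      assert (Hyx' : y < x) by lra.
      destruct (Hh x Ix) as [E1 E2]. destruct (Hh y Iy) as [E3 E4].
      pose proof (D_pres f Df x Ix). pose proof (D_pres f Df y Iy).
      destruct (inv_push f h x Dh Ix ltac:(auto) E1) as [Hx1 _].
      destruct (inv_push f h y Dh Iy ltac:(auto) E3) as [_ Hy1].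
      specialize (Hx1 Hfx). specialize (Hy1 Hfy).
      destruct (Tarski h y x) as [p [Hp Ep]]; [lra| | |].
      + intros z Hz. assert (Iz : I01 z) by (unfold I01; lra).
        split.
        * apply Rle_trans with (h y); [lra|]. apply D_mono_le; auto; lra.
        * apply Rle_trans with (h x); [|lra]. apply D_mono_le; auto; lra.
      + intros z1 z2 H1 H2 H3. apply D_mono_le; auto; unfold I01; lra.
      + assert (Ip : I01 p) by (unfold I01; lra).
        destruct (Hh p Ip) as [_ E5]. rewrite Ep in E5.
        apply (Hnf p); auto; lra. }
  set (m := (a + b) / 2).
  assert (Hm : a < m < b) by (unfold m; lra).
  destruct (Rtotal_order (f m) m) as [Hlt|[Heq|Hgt]].
  - right. intros x Hx. destruct (Rtotal_order (f x) x) as [?|[?|?]]; auto.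
    exfalso; apply (Hnf x); auto. exfalso; apply (Nomix x m); auto.
  - exfalso; apply (Hnf m); auto.
  - left. intros x Hx. destruct (Rtotal_order (f x) x) as [?|[?|?]]; auto.
    exfalso; apply (Nomix m x); auto. exfalso; apply (Hnf x); auto.
Qed.

Lemma orient (G : (R -> R) -> Prop) f a b : is_group01 G ->
  (forall g, G g -> Diff1plus g) -> G f -> 0 <= a -> a < b -> b <= 1 ->
  f a = a -> f b = b ->
  (forall x, a < x < b -> f x <> x) ->
  (exists fr, G fr /\ fr a = a /\ fr b = b /\ forall x, a < x < b -> fr x > x) /\
  (exists fl, G fl /\ fl a = a /\ fl b = b /\ forall x, a < x < b -> fl x < x).
Proof.
  intros HG HD Gf Ha Hab Hb Efa Efb Hnf.
  pose proof (sign_const G f a b HG HD Gf Ha Hab Hb Hnf) as Hs.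
  destruct HG as [_ [_ Hinv]]. destruct (Hinv f Gf) as [h [Gh Hh]].
  pose proof (HD f Gf) as Df. pose proof (HD h Gh) as Dh.
  assert (Ia : I01 a) by (unfold I01; lra). assert (Ib : I01 b) by (unfold I01; lra).
  assert (Eha : h a = a) by (destruct (Hh a Ia) as [E _]; rewrite Efa in E; auto).
  assert (Ehb : h b = b) by (destruct (Hh b Ib) as [E _]; rewrite Efb in E; auto).
  assert (Hinvp : forall x, a < x < b -> (f x > x -> h x < x) /\ (f x < x -> h x > x)).
  { intros x Hx. assert (Ix : I01 x) by (unfold I01; lra).
    apply inv_push; auto. apply D_pres; auto. apply (Hh x Ix). }
  destruct Hs as [Hr|Hl].
  - split.
    + exists f; auto.
    + exists h; repeat split; auto. intros x Hx. apply (Hinvp x Hx). auto.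
  - split.
    + exists h; repeat split; auto. intros x Hx. apply (Hinvp x Hx). auto.
    + exists f; auto.
Qed.

Definition cont_on (u v : R) (phi : R -> R) : Prop :=
  forall x, u <= x <= v -> forall eps, 0 < eps -> exists d, 0 < d /\
    forall y, u <= y <= v -> Rabs (y - x) < d -> Rabs (phi y - phi x) < eps.

Lemma cont01_on phi u v : cont01 phi -> 0 <= u -> v <= 1 -> cont_on u v phi.
Proof.
  intros H Hu Hv x Hx eps He. destruct (H x ltac:(unfold I01; lra) eps He) as [d [Hd Hy]].
  exists d; split; auto. intros y Hy1 Hy2. apply Hy; auto. unfold I01; lra.
Qed.

Lemma cont_on_neg phi u v : cont_on u v phi -> cont_on (-v) (-u) (fun x => - phi (- x)).
Proof.
  intros H x Hx eps He. destruct (H (-x) ltac:(lra) eps He) as [d [Hd Hy]].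
  exists d; split; auto. intros y Hy1 Hy2.
  replace (- phi (- y) - - phi (- x)) with (- (phi (-y) - phi (-x))) by ring.
  rewrite Rabs_Ropp. apply Hy. lra.
  replace (- y - - x) with (- (y - x)) by ring. rewrite Rabs_Ropp; auto.
Qed.

Lemma iter_neg phi n x : iter n (fun y => - phi (- y)) (- x) = - iter n phi x.
Proof. induction n; simpl; auto. rewrite IHn. rewrite Ropp_involutive. auto. Qed.

Lemma iter_in phi q p n : (forall x, q <= x <= p -> q <= phi x <= p) -> q <= p ->
  q <= iter n phi q <= p.
Proof. intros H Hqp. induction n; simpl. lra. apply H; auto. Qed.

Lemma orbit_right phi q p : q < p ->
  (forall x, q <= x <= p -> q <= phi x <= p) -> cont_on q p phi ->
  (forall x, q <= x < p -> phi x > x) ->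
  forall eta, 0 < eta -> exists N, iter N phi q > p - eta.
Proof.
  intros Hqp Hmap Hc Hpush eta He.
  apply NNPP. intros Hn.
  assert (Hall : forall N, iter N phi q <= p - eta).
  { intros N. apply Rnot_lt_le. intro H. apply Hn. exists N. lra. }
  set (E := fun y => exists k, y = iter k phi q).
  assert (Hb : bound E) by (exists p; intros y [k ->]; pose proof (iter_in phi q p k Hmap ltac:(lra)); lra).
  assert (Hne : exists y, E y) by (exists q; exists O; auto).
  destruct (completeness E Hb Hne) as [L [Hub Hlub]].
  assert (HqL : q <= L) by (apply Hub; exists O; auto).
  assert (HLp : L <= p - eta) by (apply Hlub; intros y [k ->]; auto).
  assert (HfL : phi L > L) by (apply Hpush; lra).
  destruct (Hc L ltac:(lra) (phi L - L) ltac:(lra)) as [d [Hd Hy]].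
  assert (Hex : exists k, iter k phi q > L - d).
  { apply NNPP. intro Hk. assert (L <= L - d); [|lra].
    apply Hlub. intros y [k ->]. apply Rnot_lt_le. intro H. apply Hk. exists k. lra. }
  destruct Hex as [k Hk].
  assert (Hk2 : iter k phi q <= L) by (apply Hub; exists k; auto).
  pose proof (iter_in phi q p k Hmap ltac:(lra)).
  assert (Habs : Rabs (iter k phi q - L) < d) by (unfold Rabs; destruct Rcase_abs; lra).
  specialize (Hy (iter k phi q) ltac:(lra) Habs).
  assert (HS : iter (S k) phi q <= L) by (apply Hub; exists (S k); auto).
  simpl in HS.
  assert (phi (iter k phi q) > L).
  { pose proof (Rle_abs (phi (iter k phi q) - phi L)).
    pose proof (Rle_abs (- (phi (iter k phi q) - phi L))). rewrite Rabs_Ropp in *. lra. }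
  lra.
Qed.

Lemma orbit_left phi p q : p < q ->
  (forall x, p <= x <= q -> p <= phi x <= q) -> cont_on p q phi ->
  (forall x, p < x <= q -> phi x < x) ->
  forall eta, 0 < eta -> exists N, iter N phi q < p + eta.
Proof.
  intros Hpq Hmap Hc Hpush eta He.
  destruct (orbit_right (fun x => - phi (- x)) (-q) (-p) ltac:(lra)) with eta as [N HN]; auto.
  - intros x Hx. pose proof (Hmap (-x) ltac:(lra)). lra.
  - apply cont_on_neg; auto.
  - intros x Hx. pose proof (Hpush (-x) ltac:(lra)). lra.
  - exists N. rewrite iter_neg in HN. lra.
Qed.

Lemma first_fixed phi u y : u < y -> cont_on u y phi -> phi u > u -> phi y < y ->
  exists b, u < b <= y /\ phi b = b /\ forall x, u <= x < b -> phi x > x.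
Proof.
  intros Huy Hc Hu Hy.
  set (S := fun x => u <= x <= y /\ forall t, u <= t <= x -> phi t > t).
  assert (Hb : bound S) by (exists y; intros x [Hx _]; lra).
  assert (Hne : exists x, S x).
  { exists u. split; [lra|]. intros t Ht. replace t with u by lra; auto. }
  destruct (completeness S Hb Hne) as [b [Hub Hlub]].
  assert (Hub1 : u <= b) by (apply Hub; destruct Hne as [x Hx]; split; [lra|]; intros t Ht; replace t with u by lra; auto).
  assert (Hby : b <= y) by (apply Hlub; intros x [Hx _]; lra).
  assert (Hi : forall t, u <= t < b -> phi t > t).
  { intros t Ht. apply NNPP. intro Hn.
    assert (b <= t); [|lra]. apply Hlub. intros x [Hx Hx2].
    apply Rnot_lt_le. intro Hlt. apply Hn. apply Hx2. lra. }
  assert (Hfix : phi b = b).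
  { destruct (Rtotal_order (phi b) b) as [Hlt|[Heq|Hgt]]; auto.
    - exfalso.
      assert (Hub2 : u < b) by (destruct (Req_dec u b) as [E|E]; [subst; lra| lra]).
      destruct (Hc b ltac:(lra) ((b - phi b)/2) ltac:(lra)) as [d [Hd Hd2]].
      set (dd := Rmin d ((b - phi b) / 2)).
      assert (Hdd : 0 < dd) by (apply Rmin_pos; lra).
      assert (Hdd1 : dd <= d) by apply Rmin_l.
      assert (Hdd2 : dd <= (b - phi b) / 2) by apply Rmin_r.
      set (t := Rmax u (b - dd / 2)).
      assert (Ht1 : u <= t) by apply Rmax_l.
      assert (Ht2 : t < b) by (unfold t, Rmax; destruct Rle_dec; lra).
      assert (Ht3 : b - dd/2 <= t) by apply Rmax_r.
      specialize (Hd2 t ltac:(lra) ltac:(unfold Rabs; destruct Rcase_abs; lra)).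
      specialize (Hi t ltac:(lra)).
      pose proof (Rle_abs (phi t - phi b)). lra.
    - exfalso.
      assert (Hb2 : b < y) by (destruct (Req_dec b y) as [E|E]; [subst; lra| lra]).
      destruct (Hc b ltac:(lra) ((phi b - b)/2) ltac:(lra)) as [d [Hd Hd2]].
      set (dd := Rmin d ((phi b - b) / 2)).
      assert (Hdd : 0 < dd) by (apply Rmin_pos; lra).
      assert (Hdd1 : dd <= d) by apply Rmin_l.
      assert (Hdd2 : dd <= (phi b - b) / 2) by apply Rmin_r.
      set (x := Rmin (b + dd / 2) y).
      assert (Hx1 : x <= y) by apply Rmin_r.
      assert (Hx2 : x <= b + dd/2) by apply Rmin_l.
      assert (Hx3 : b < x) by (unfold x, Rmin; destruct Rle_dec; lra).
      assert (HSx : S x).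
      { split; [lra|]. intros t Ht. destruct (Rlt_or_le t b) as [Htb|Htb].
        - apply Hi; lra.
        - specialize (Hd2 t ltac:(lra) ltac:(unfold Rabs; destruct Rcase_abs; lra)).
          pose proof (Rle_abs (- (phi t - phi b))). rewrite Rabs_Ropp in H. lra. }
      pose proof (Hub x HSx). lra. }
  exists b. split; [|split; auto].
  split; auto. destruct (Req_dec u b) as [E|E]; [subst; lra| lra].
Qed.

Lemma last_fixed phi y d : y < d -> cont_on y d phi -> phi y > y -> phi d < d ->
  exists c, y <= c < d /\ phi c = c /\ forall x, c < x <= d -> phi x < x.
Proof.
  intros Hyd Hc Hy Hd.
  destruct (first_fixed (fun x => - phi (- x)) (-d) (-y)) as [b [Hb [Eb Hb2]]].
  - lra.
  - apply cont_on_neg; auto.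
  - rewrite Ropp_involutive; lra.
  - rewrite Ropp_involutive; lra.
  - exists (-b). split; [lra|]. split; [lra|].
    intros x Hx. pose proof (Hb2 (-x) ltac:(lra)). rewrite Ropp_involutive in H. lra.
Qed.

Lemma nat_above (r : R) : exists n : nat, r < INR n.
Proof.
  destruct (archimed r) as [H1 _].
  destruct (Z_le_gt_dec (up r) 0) as [Hz|Hz].
  - exists O. simpl. apply IZR_le in Hz. lra.
  - exists (Z.to_nat (up r)). rewrite INR_IZR_INZ, Z2Nat.id by lia. lra.
Qed.

Lemma bernoulli n : 1 + INR n / 3 <= (4/3) ^ n.
Proof.
  induction n. simpl. lra.
  rewrite S_INR. simpl. pose proof (pos_INR n).
  assert (0 <= (4/3)^n) by (apply pow_le; lra). nra.
Qed.

Lemma pow43_big X : exists n, X < (4/3) ^ n.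
Proof.
  destruct (nat_above (3 * X)) as [n Hn]. exists n.
  pose proof (bernoulli n). lra.
Qed.

Fixpoint W (A B : R -> R) (w : list bool) (x : R) : R :=
  match w with nil => x | t :: w' => (if t then A else B) (W A B w' x) end.

Fixpoint words (n : nat) : list (list bool) :=
  match n with O => [nil] | S n => map (cons true) (words n) ++ map (cons false) (words n) end.

Fixpoint sumL (f : list bool -> R) (l : list (list bool)) : R :=
  match l with nil => 0 | w :: l' => f w + sumL f l' end.

Lemma sumL_app f l1 l2 : sumL f (l1 ++ l2) = sumL f l1 + sumL f l2.
Proof. induction l1; simpl; [ring| rewrite IHl1; ring]. Qed.
Lemma sumL_map f g l : sumL f (map g l) = sumL (fun w => f (g w)) l.
Proof. induction l; simpl; auto. rewrite IHl; auto. Qed.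
Lemma sumL_le f g l : (forall w, In w l -> f w <= g w) -> sumL f l <= sumL g l.
Proof. induction l; simpl; intros H. lra. pose proof (H a (or_introl eq_refl)).
  assert (sumL f l <= sumL g l) by (apply IHl; auto). lra. Qed.
Lemma sumL_plus f g l : sumL (fun w => f w + g w) l = sumL f l + sumL g l.
Proof. induction l; simpl; [ring| rewrite IHl; ring]. Qed.
Lemma sumL_scal k f l : sumL (fun w => k * f w) l = k * sumL f l.
Proof. induction l; simpl; [ring| rewrite IHl; ring]. Qed.
Lemma sumL_ext f g l : (forall w, f w = g w) -> sumL f l = sumL g l.
Proof. induction l; simpl; intros H; auto. rewrite H, IHl; auto. Qed.

Lemma words_count n : sumL (fun _ => 1) (words n) = 2 ^ n.
Proof. induction n; simpl. ring. rewrite sumL_app, !sumL_map, IHn. ring. Qed.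

Lemma words_len n w : In w (words n) -> length w = n.
Proof.
  revert w; induction n; simpl; intros w H.
  - destruct H as [<-|[]]; auto.
  - apply in_app_or in H. destruct H as [H|H]; apply in_map_iff in H;
    destruct H as [w' [<- H]]; simpl; rewrite IHn; auto.
Qed.

Definition PP (A B : R -> R) (c b : R) : Prop :=
  0 <= c /\ c < b /\ b <= 1 /\ Diff1plus A /\ Diff1plus B /\
  (forall x, c <= x <= b -> c <= A x <= b) /\
  (forall x, c <= x <= b -> c <= B x <= b) /\ B b <= A c.

Lemma W_J A B c b w x : PP A B c b -> c <= x <= b -> c <= W A B w x <= b.
Proof.
  intros (Hc & Hcb & Hb & DA & DB & HA & HB & Hd) Hx.
  induction w as [|t w IH]; simpl; auto. destruct t; auto.
Qed.

Lemma W_lt A B c b w x y : PP A B c b -> c <= x -> x < y -> y <= b -> W A B w x < W A B w y.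
Proof.
  intros HP Hx Hxy Hy. pose proof HP as (Hc & Hcb & Hb & DA & DB & HA & HB & Hd).
  induction w as [|t w IH]; simpl; auto.
  pose proof (W_J A B c b w x HP ltac:(lra)). pose proof (W_J A B c b w y HP ltac:(lra)).
  destruct t; apply D_mono; auto; unfold I01; lra.
Qed.

Lemma W_le A B c b w x y : PP A B c b -> c <= x -> x <= y -> y <= b -> W A B w x <= W A B w y.
Proof.
  intros HP Hx [Hxy|Hxy] Hy. left; apply (W_lt A B c b); auto. subst; lra.
Qed.

Lemma W_G (G : (R -> R) -> Prop) A B w : is_group01 G -> (forall g, G g -> Diff1plus g) ->
  G A -> G B -> exists h, G h /\ forall x, I01 x -> h x = W A B w x.
Proof.
  intros [[e [Ge He]] [Hc _]] HD GA GB. induction w as [|t w [h [Gh Hh]]].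
  - exists e; split; auto.
  - destruct (Hc (if t then A else B) h ltac:(destruct t; auto) Gh) as [h' [Gh' Hh']].
    exists h'; split; auto. intros x Ix. rewrite Hh', Hh; auto.
Qed.

Definition lenw A B c b w := W A B w b - W A B w c.

Lemma sum_len A B c b : PP A B c b -> forall n (phi : R -> R),
  (forall x y, c <= x -> x <= y -> y <= b -> phi x <= phi y) ->
  sumL (fun w => phi (W A B w b) - phi (W A B w c)) (words n) <= phi b - phi c.
Proof.
  intros HP. pose proof HP as (Hc & Hcb & Hb & DA & DB & HA & HB & Hd).
  induction n as [|n IH]; intros phi Hphi; simpl.
  - lra.
  - rewrite sumL_app, !sumL_map. simpl.
    pose proof (IH (fun x => phi (A x))) as H1. simpl in H1.
    pose proof (IH (fun x => phi (B x))) as H2. simpl in H2.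
    assert (HmA : forall x y, c <= x -> x <= y -> y <= b -> phi (A x) <= phi (A y)).
    { intros x y H3 H4 H5. pose proof (HA x ltac:(lra)). pose proof (HA y ltac:(lra)).
      apply Hphi; try lra. apply D_mono_le; auto; unfold I01; lra. }
    assert (HmB : forall x y, c <= x -> x <= y -> y <= b -> phi (B x) <= phi (B y)).
    { intros x y H3 H4 H5. pose proof (HB x ltac:(lra)). pose proof (HB y ltac:(lra)).
      apply Hphi; try lra. apply D_mono_le; auto; unfold I01; lra. }
    specialize (H1 HmA). specialize (H2 HmB).
    pose proof (HA b ltac:(lra)). pose proof (HA c ltac:(lra)).
    pose proof (HB b ltac:(lra)). pose proof (HB c ltac:(lra)).
    assert (phi (A b) <= phi b) by (apply Hphi; lra).
    assert (phi (B b) <= phi (A c)) by (apply Hphi; lra).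
    assert (phi c <= phi (B c)) by (apply Hphi; lra).
    lra.
Qed.

Lemma sum_lenw A B c b n : PP A B c b -> sumL (lenw A B c b) (words n) <= b - c.
Proof.
  intros HP. apply (sum_len A B c b HP n (fun x => x)). intros; lra.
Qed.

Lemma lenw_pos A B c b w : PP A B c b -> 0 <= lenw A B c b w.
Proof.
  intros HP. pose proof HP as (Hc & Hcb & Hb & _).
  unfold lenw. pose proof (W_le A B c b w c b HP ltac:(lra) ltac:(lra) ltac:(lra)). lra.
Qed.

Definition indn A B c b eta w : nat :=
  if Rle_dec (lenw A B c b w) eta then 0%nat else 1%nat.

Fixpoint bad A B c b eta w : nat :=
  match w with nil => 0%nat | t :: w' => (bad A B c b eta w' + indn A B c b eta w')%nat end.

Lemma sum_ind A B c b eta n : PP A B c b -> 0 < eta ->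
  sumL (fun w => INR (indn A B c b eta w)) (words n) <= (b - c) / eta.
Proof.
  intros HP He.
  assert (H : sumL (fun w => eta * INR (indn A B c b eta w)) (words n) <= b - c).
  { eapply Rle_trans; [| apply (sum_lenw A B c b n HP)].
    apply sumL_le. intros w _. unfold indn. destruct Rle_dec; simpl.
    - rewrite Rmult_0_r. apply lenw_pos; auto.
    - lra. }
  rewrite sumL_scal in H. apply Rmult_le_reg_l with eta; auto.
  replace (eta * ((b - c) / eta)) with (b - c) by (field; lra). auto.
Qed.

Lemma sum_bad A B c b eta n : PP A B c b -> 0 < eta ->
  sumL (fun w => INR (bad A B c b eta w)) (words n) <= 2 * ((b - c) / eta) * (2 ^ n - 1).
Proof.
  intros HP He. induction n as [|n IH]; simpl.
  - lra.
  - rewrite sumL_app, !sumL_map. simpl.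
    rewrite (sumL_ext (fun w => INR (bad A B c b eta w + indn A B c b eta w))
              (fun w => INR (bad A B c b eta w) + INR (indn A B c b eta w))) by (intros; apply plus_INR).
    rewrite sumL_plus.
    pose proof (sum_ind A B c b eta n HP He). lra.
Qed.

Lemma distort A B c b L eta : PP A B c b -> 1 <= L ->
  (forall t : bool, forall u v u' v', I01 u -> I01 v -> I01 u' -> I01 v' -> u < v -> u' < v' ->
    u' <= u -> v <= v' ->
    let l := if t then A else B in
    (l v - l u) / (v - u) <= L * ((l v' - l u') / (v' - u')) /\
    (v' - u' <= eta -> (l v - l u) / (v - u) <= 3/2 * ((l v' - l u') / (v' - u')))) ->
  forall w x y, c <= x -> x < y -> y <= b ->
  W A B w y - W A B w x <=
    L ^ (bad A B c b eta w) * (3/2) ^ (length w) * lenw A B c b w * ((y - x) / (b - c)).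
Proof.
  intros HP HL Hlet w x y Hx Hxy Hy. pose proof HP as (Hc & Hcb & Hb & _).
  assert (HK : 0 < (y - x) / (b - c)) by (apply Rdiv_lt_0_compat; lra).
  set (K := (y - x) / (b - c)) in *.
  induction w as [|t w IH].
  - simpl. unfold lenw; simpl. unfold K. right. field. lra.
  - set (u := W A B w x). set (v := W A B w y). set (u' := W A B w c). set (v' := W A B w b).
    assert (Huv : u < v) by (apply (W_lt A B c b); auto).
    assert (Huv' : u' < v') by (apply (W_lt A B c b); [assumption|lra..]).
    assert (H1 : u' <= u) by (apply (W_le A B c b); [assumption|lra..]).
    assert (H2 : v <= v') by (apply (W_le A B c b); [assumption|lra..]).
    pose proof (W_J A B c b w x HP ltac:(lra)). pose proof (W_J A B c b w y HP ltac:(lra)).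
    pose proof (W_J A B c b w c HP ltac:(lra)). pose proof (W_J A B c b w b HP ltac:(lra)).
    fold u v u' v' in H, H0, H3, H4.
    specialize (Hlet t u v u' v' ltac:(unfold I01; lra) ltac:(unfold I01; lra)
       ltac:(unfold I01; lra) ltac:(unfold I01; lra) Huv Huv' H1 H2).
    simpl in Hlet. destruct Hlet as [Hbad Hgood].
    set (l := if t then A else B) in *.
    simpl. fold l. fold u v. unfold lenw at 1. simpl. fold l. fold u' v'.
    unfold lenw in IH. fold u v u' v' in IH.
    set (q := (l v - l u) / (v - u)) in *. set (q' := (l v' - l u') / (v' - u')) in *.
    assert (Eq : l v - l u = q * (v - u)) by (unfold q; field; lra).
    assert (Eq' : l v' - l u' = q' * (v' - u')) by (unfold q'; field; lra).
    assert (Hq0 : 0 <= q).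
    { unfold q. apply Rmult_le_pos; [|left; apply Rinv_0_lt_compat; lra].
      destruct t; unfold l; pose proof HP as (_ & _ & _ & DA & DB & _);
      left; apply Rlt_0_minus; apply D_mono; auto; unfold I01; lra. }
    set (P := L ^ bad A B c b eta w * (3 / 2) ^ length w) in *.
    assert (HP0 : 0 <= P) by (unfold P; apply Rmult_le_pos; apply pow_le; lra).
    assert (Step : l v - l u <= q * (P * (v' - u') * K)).
    { rewrite Eq. apply Rmult_le_compat_l; auto. }
    unfold indn, lenw. fold u' v'.
    destruct Rle_dec as [Hg|Hb2]; simpl.
    + rewrite Nat.add_0_r. specialize (Hgood Hg).
      eapply Rle_trans; [apply Step|]. rewrite Eq'.
      assert (0 <= P * (v' - u') * K) by (apply Rmult_le_pos; [apply Rmult_le_pos|]; lra).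
      apply Rle_trans with (3/2 * q' * (P * (v' - u') * K)).
      { apply Rmult_le_compat_r; auto. }
      unfold P. right. ring.
    + rewrite Nat.add_1_r. simpl.
      eapply Rle_trans; [apply Step|]. rewrite Eq'.
      assert (0 <= P * (v' - u') * K) by (apply Rmult_le_pos; [apply Rmult_le_pos|]; lra).
      apply Rle_trans with (L * q' * (P * (v' - u') * K)).
      { apply Rmult_le_compat_r; auto. }
      assert (HLq : 0 <= L * q') by lra.
      assert (0 <= L * q' * (P * (v' - u') * K)) by (apply Rmult_le_pos; lra).
      apply Rle_trans with (3/2 * (L * q' * (P * (v' - u') * K))); [lra|].
      unfold P. right. ring.
Qed.

Lemma pingpong (G : (R -> R) -> Prop) A B c b : is_group01 G ->
  (forall g, G g -> Diff1plus g) -> no_hyperbolic_fixed G ->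
  G A -> G B -> PP A B c b -> False.
Proof.
  intros HG HD Hnh GA GB HP.
  pose proof HP as (Hc & Hcb & Hb & DA & DB & HA & HB & Hd).
  destruct (letter A DA) as [LA [eA [HLA [HeA HlA]]]].
  destruct (letter B DB) as [LB [eB [HLB [HeB HlB]]]].
  set (L := Rmax LA LB). set (eta := Rmin eA eB).
  assert (HL : 1 <= L) by (unfold L; eapply Rle_trans; [apply HLA| apply Rmax_l]).
  assert (Heta : 0 < eta) by (unfold eta; apply Rmin_pos; auto).
  assert (Hlet : forall t : bool, forall u v u' v', I01 u -> I01 v -> I01 u' -> I01 v' -> u < v -> u' < v' ->
    u' <= u -> v <= v' ->
    let l := if t then A else B in
    (l v - l u) / (v - u) <= L * ((l v' - l u') / (v' - u')) /\
    (v' - u' <= eta -> (l v - l u) / (v - u) <= 3/2 * ((l v' - l u') / (v' - u')))).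
  { intros t u v u' v' Iu Iv Iu' Iv' Huv Huv' H1 H2 l.
    assert (Hq' : 0 <= (l v' - l u') / (v' - u')).
    { unfold Rdiv. apply Rmult_le_pos; [|left; apply Rinv_0_lt_compat; lra].
      destruct t; unfold l; left; apply Rlt_0_minus; apply D_mono; auto. }
    destruct t; unfold l in *.
    - destruct (HlA u v u' v' Iu Iv Iu' Iv' Huv Huv' H1 H2) as [X Y]. split.
      + eapply Rle_trans; [apply X|]. apply Rmult_le_compat_r; auto. apply Rmax_l.
      + intros He. apply Y. eapply Rle_trans; [apply He| apply Rmin_l].
    - destruct (HlB u v u' v' Iu Iv Iu' Iv' Huv Huv' H1 H2) as [X Y]. split.
      + eapply Rle_trans; [apply X|]. apply Rmult_le_compat_r; auto. apply Rmax_r.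
      + intros He. apply Y. eapply Rle_trans; [apply He| apply Rmin_r]. }
  set (K := (b - c) / eta).
  assert (HK : 0 < K) by (unfold K; apply Rdiv_lt_0_compat; lra).
  destruct (nat_above (4 * K)) as [B0 HB0].
  assert (HB0pos : 0 < INR B0) by lra.
  destruct (pow43_big (4 * L ^ B0)) as [n Hn].
  set (V := fun w => L ^ (bad A B c b eta w) * (3/2) ^ n * lenw A B c b w / (b - c)).
  assert (Hex : exists w, In w (words n) /\ V w < 1/2).
  { apply NNPP. intro Hno.
    assert (Hall : forall w, In w (words n) -> 1/2 <= V w).
    { intros w Hw. apply Rnot_lt_le. intro Hlt. apply Hno. exists w; auto. }
    set (T := (3/2) ^ n). set (Q := L ^ B0).
    assert (HT : 0 < T) by (unfold T; apply pow_lt; lra).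
    assert (HQ : 1 <= Q) by (unfold Q; rewrite <- (pow1 B0); apply pow_incr; lra).
    set (Cc := (b - c) / (2 * T * Q)).
    assert (HCc : 0 < Cc) by (unfold Cc; apply Rdiv_lt_0_compat; [lra| apply Rmult_lt_0_compat; lra]).
    assert (Hpt : forall w, In w (words n) ->
       Cc * 1 + (- Cc / INR B0) * INR (bad A B c b eta w) <= lenw A B c b w).
    { intros w Hw. specialize (Hall w Hw). unfold V in Hall. fold T in Hall.
      pose proof (lenw_pos A B c b w HP) as Hl0.
      set (bw := bad A B c b eta w) in *.
      assert (HLb : 0 < L ^ bw) by (apply pow_lt; lra).
      assert (Hlow : (b - c) / (2 * T * L ^ bw) <= lenw A B c b w).
      { apply Rmult_le_reg_l with (2 * T * L ^ bw). apply Rmult_lt_0_compat; lra.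
        replace (2 * T * L ^ bw * ((b - c) / (2 * T * L ^ bw))) with (b - c) by (field; lra).
        apply Rmult_le_reg_r with (/ (b - c)). apply Rinv_0_lt_compat; lra.
        rewrite Rinv_r by lra. unfold Rdiv in Hall.
        replace (2 * T * L ^ bw * lenw A B c b w * / (b - c)) with
          (2 * (L ^ bw * T * lenw A B c b w * / (b - c))) by ring. lra. }
      destruct (le_lt_dec bw B0) as [Hle|Hgt].
      - assert (HLQ : L ^ bw <= Q) by (unfold Q; apply Rle_pow; auto).
        assert (Cc <= (b - c) / (2 * T * L ^ bw)).
        { unfold Cc. unfold Rdiv. apply Rmult_le_compat_l; [lra|].
          apply Rinv_le_contravar. apply Rmult_lt_0_compat; lra.
          apply Rmult_le_compat_l; lra. }
        assert (0 <= Cc / INR B0 * INR bw).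
        { apply Rmult_le_pos; [unfold Rdiv; apply Rmult_le_pos; [lra| left; apply Rinv_0_lt_compat; lra]|apply pos_INR]. }
        unfold Rdiv in *. lra.
      - apply lt_INR in Hgt.
        assert (E1 : Cc / INR B0 * INR B0 = Cc) by (field; lra).
        assert (E2 : Cc / INR B0 * INR B0 < Cc / INR B0 * INR bw).
        { apply Rmult_lt_compat_l; auto. apply Rdiv_lt_0_compat; lra. }
        unfold Rdiv in *. lra. }
    assert (Hsum : sumL (fun w => Cc * 1 + (- Cc / INR B0) * INR (bad A B c b eta w)) (words n)
                   <= b - c).
    { eapply Rle_trans; [apply sumL_le; apply Hpt|]. apply sum_lenw; auto. }
    rewrite sumL_plus, sumL_scal, sumL_scal, words_count in Hsum.
    pose proof (sum_bad A B c b eta n HP Heta) as HS. fold K in HS.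
    set (S := sumL (fun w => INR (bad A B c b eta w)) (words n)) in *.
    assert (H2n : 0 < 2 ^ n) by (apply pow_lt; lra).
    assert (HS2 : S <= 2 * K * 2 ^ n) by lra.
    assert (HSB : Cc / INR B0 * S <= Cc * 2 ^ n / 2).
    { apply Rle_trans with (Cc / INR B0 * (2 * K * 2 ^ n)).
      { apply Rmult_le_compat_l; auto. left; apply Rdiv_lt_0_compat; lra. }
      unfold Rdiv. rewrite !Rmult_assoc. apply Rmult_le_compat_l; [lra|].
      apply Rmult_le_reg_l with (INR B0); auto.
      rewrite <- !Rmult_assoc, Rinv_r, Rmult_1_l by lra.
      replace (INR B0 * 2 ^ n * / 2) with (INR B0 / 2 * 2 ^ n) by (field).
      replace (2 * K * 2 ^ n) with ((2 * K) * 2 ^ n) by ring.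
      apply Rmult_le_compat_r; lra. }
    assert (Hfin : Cc * 2 ^ n / 2 <= b - c).
    { replace (- Cc / INR B0 * S) with (- (Cc / INR B0 * S)) in Hsum by (field; lra). lra. }
    unfold Cc in Hfin.
    assert (H2 : 2 ^ n <= 4 * T * Q).
    { apply Rmult_le_reg_l with ((b - c) / (4 * T * Q)).
      apply Rdiv_lt_0_compat; [lra| apply Rmult_lt_0_compat; lra].
      replace ((b - c) / (4 * T * Q) * (4 * T * Q)) with (b - c) by (field; split; lra).
      replace ((b - c) / (4 * T * Q) * 2 ^ n) with ((b - c) / (2 * T * Q) * 2 ^ n / 2) by (field; split; lra).
      auto. }
    assert (E43 : 2 ^ n = (4/3) ^ n * T).
    { unfold T. rewrite <- Rpow_mult_distr. f_equal. field. }
    rewrite E43 in H2.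
    assert ((4/3) ^ n <= 4 * Q).
    { apply Rmult_le_reg_r with T; auto. lra. }
    unfold Q in *. lra. }
  destruct Hex as [w [Hw HV]].
  pose proof (words_len n w Hw) as Hlen.
  destruct (W_G G A B w HG HD GA GB) as [h [Gh Hh]].
  destruct (Tarski (W A B w) c b) as [p [Hp Ep]]; [lra| | |].
  { intros x Hx. apply W_J; auto. }
  { intros x y H1 H2 H3. apply (W_le A B c b); auto; lra. }
  assert (Ip : I01 p) by (unfold I01; lra).
  assert (Ehp : h p = p) by (rewrite Hh; auto).
  pose proof (Hnh h p Gh Ip Ehp) as Hder.
  destruct (lim_unfold _ _ _ _ Hder (1/2) ltac:(lra)) as [alp [Halp Hlim]].
  assert (Hdist : forall x y, c <= x -> x < y -> y <= b ->
     W A B w y - W A B w x <= V w * (y - x)).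
  { intros x y H1 H2 H3. eapply Rle_trans.
    apply (distort A B c b L eta HP HL Hlet w x y H1 H2 H3).
    rewrite Hlen. unfold V. right. field. lra. }
  assert (Hy : exists y, c <= y <= b /\ y <> p /\ Rabs (y - p) < alp).
  { destruct (Rlt_or_le p b) as [Hpb|Hpb].
    - exists (Rmin (p + alp / 2) b).
      assert (Rmin (p + alp/2) b <= p + alp/2) by apply Rmin_l.
      assert (Rmin (p + alp/2) b <= b) by apply Rmin_r.
      assert (p < Rmin (p + alp/2) b) by (unfold Rmin; destruct Rle_dec; lra).
      split; [lra|]. split; [lra|]. unfold Rabs; destruct Rcase_abs; lra.
    - exists (Rmax (p - alp / 2) c).
      assert (p - alp/2 <= Rmax (p - alp/2) c) by apply Rmax_l.
      assert (c <= Rmax (p - alp/2) c) by apply Rmax_r.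
      assert (Rmax (p - alp/2) c < p) by (unfold Rmax; destruct Rle_dec; lra).
      split; [lra|]. split; [lra|]. unfold Rabs; destruct Rcase_abs; lra. }
  destruct Hy as [y [Hyc [Hyp Hya]]].
  assert (Iy : I01 y) by (unfold I01; lra).
  specialize (Hlim y (conj Iy Hyp) Hya).
  rewrite (Hh y Iy), (Hh p Ip), Ep in Hlim.
  assert (Hq : (W A B w y - p) / (y - p) <= V w).
  { destruct (Rlt_or_le p y) as [Hpy|Hpy].
    - pose proof (Hdist p y ltac:(lra) Hpy ltac:(lra)) as X. rewrite Ep in X.
      apply Rmult_le_reg_r with (y - p); [lra|].
      unfold Rdiv. rewrite Rmult_assoc, Rinv_l, Rmult_1_r by lra. lra.
    - assert (Hyp2 : y < p) by lra.
      pose proof (Hdist y p ltac:(lra) Hyp2 ltac:(lra)) as X. rewrite Ep in X.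
      replace ((W A B w y - p) / (y - p)) with ((p - W A B w y) / (p - y)) by (field; lra).
      apply Rmult_le_reg_r with (p - y); [lra|].
      unfold Rdiv. rewrite Rmult_assoc, Rinv_l, Rmult_1_r by lra. lra. }
  pose proof (Rle_abs (- ((W A B w y - p) / (y - p) - 1))). rewrite Rabs_Ropp in H. lra.
Qed.

Lemma iter_in2 phi q p n x : (forall x, q <= x <= p -> q <= phi x <= p) ->
  q <= x <= p -> q <= iter n phi x <= p.
Proof. intros H Hx. induction n; simpl; auto. Qed.

Lemma core (G : (R -> R) -> Prop) c b F Gg : is_group01 G ->
  (forall g, G g -> Diff1plus g) -> no_hyperbolic_fixed G ->
  0 <= c -> c < b -> b <= 1 ->
  G F -> F b = b -> (forall x, c <= x < b -> F x > x) ->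
  G Gg -> Gg c = c -> (forall x, c < x <= b -> Gg x < x) -> False.
Proof.
  intros HG HD Hnh Hc Hcb Hb GF EF HF GGg EG HGg.
  pose proof (HD F GF) as DF. pose proof (HD Gg GGg) as DG.
  assert (MF : forall x, c <= x <= b -> c <= F x <= b).
  { intros x Hx. split.
    - destruct (Rlt_or_le x b) as [H|H]. pose proof (HF x ltac:(lra)); lra.
      replace x with b by lra. lra.
    - rewrite <- EF. apply D_mono_le; auto; unfold I01; lra. }
  assert (MG : forall x, c <= x <= b -> c <= Gg x <= b).
  { intros x Hx. split.
    - rewrite <- EG at 1. apply D_mono_le; auto; unfold I01; lra.
    - destruct (Rlt_or_le c x) as [H|H]. pose proof (HGg x ltac:(lra)); lra.
      replace x with c by lra. lra. }
  set (m0 := (c + b) / 2).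
  destruct (orbit_right F c b Hcb MF (cont01_on F c b (D_cont F DF) Hc Hb) HF (b - m0))
    as [N1 HN1]; [unfold m0; lra|].
  destruct (orbit_left Gg c b Hcb MG (cont01_on Gg c b (D_cont Gg DG) Hc Hb) HGg (m0 - c))
    as [N2 HN2]; [unfold m0; lra|].
  destruct (iter_G G F N1 HG GF DF) as [A [GA HA]].
  destruct (iter_G G Gg N2 HG GGg DG) as [B [GB HB]].
  apply (pingpong G A B c b HG HD Hnh GA GB).
  unfold PP. split; [lra|]. split; [lra|]. split; [lra|].
  split; [auto|]. split; [auto|]. split; [|split].
  - intros z Hx. rewrite HA by (unfold I01; lra). apply iter_in2; auto.
  - intros z Hx. rewrite HB by (unfold I01; lra). apply iter_in2; auto.
  - rewrite HA, HB by (unfold I01; lra). lra.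
Qed.

Lemma iter_inv (P : R -> Prop) phi n x : (forall y, P y -> P (phi y)) -> P x -> P (iter n phi x).
Proof. intros H Hx. induction n; simpl; auto. Qed.

Lemma one_side (G : (R -> R) -> Prop) a b c d : is_group01 G ->
  (forall g, G g -> Diff1plus g) -> no_hyperbolic_fixed G ->
  succ_fixed G a b -> succ_fixed G c d -> exactly_one_in a b c d -> False.
Proof.
  intros HG HD Hnh [f [Gf (Ha & Hab & Hb & Efa & Efb & Hnf)]] [g [Gg (Hc & Hcd & Hd & Egc & Egd & Hng)]] Hex.
  destruct (orient G f a b HG HD Gf Ha Hab Hb Efa Efb Hnf)
    as [[fr [Gfr (Efra & Efrb & Hfr)]] [fl [Gfl (Efla & Eflb & Hfl)]]].
  destruct (orient G g c d HG HD Gg Hc Hcd Hd Egc Egd Hng)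
    as [[gr [Ggr (Egra & Egrb & Hgr)]] [gl [Ggl (Egla & Eglb & Hgl)]]].
  pose proof (HD fr Gfr) as Dfr. pose proof (HD fl Gfl) as Dfl.
  pose proof (HD gr Ggr) as Dgr. pose proof (HD gl Ggl) as Dgl.
  destruct Hex as [[H1 H2]|[H1 H2]].
  - assert (Hdb : b <= d).
    { apply Rnot_lt_le. intro Hlt. apply H2. lra. }
    destruct Hdb as [Hdb|Hdb].
    +
      apply (core G c b fr gl HG HD Hnh); auto; try lra.
      * intros x Hx. apply Hfr; lra.
      * intros x Hx. apply Hgl; lra.
    +
      subst d.
      assert (Ic : I01 c) by (unfold I01; lra). assert (Ib : I01 b) by (unfold I01; lra).
      set (y0 := fr c).
      assert (Hy0 : c < y0 < b).
      { unfold y0. split. apply Hfr; lra. rewrite <- Efrb. apply D_mono; auto; unfold I01 in *; lra. }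
      set (z := fr y0).
      assert (Iy0 : I01 y0) by (unfold I01; lra).
      assert (Hz : c < z < b).
      { unfold z. split. pose proof (Hfr y0 ltac:(lra)); lra. rewrite <- Efrb. apply D_mono; auto; unfold I01 in *; lra. }
      assert (Hglin : forall x, c < x < b -> c < gl x < b).
      { intros x Hx. split. rewrite <- Egla at 1. apply D_mono; auto; unfold I01; lra.
        pose proof (Hgl x Hx); lra. }
      destruct (orbit_left gl c z ltac:(lra)) with (eta := y0 - c) as [m Hm].
      { intros x Hx. destruct (Req_dec x c) as [->|Hne]. rewrite Egla; lra.
        pose proof (Hglin x ltac:(lra)). pose proof (Hgl x ltac:(lra)). lra. }
      { apply cont01_on; [apply D_cont; auto| lra| lra]. }
      { intros x Hx. apply Hgl; lra. }
      { lra. }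
      destruct (iter_G G gl m HG Ggl Dgl) as [gm [Ggm Hgm]].
      destruct HG as [He [Hcomp Hinv]].
      destruct (Hcomp gm fr Ggm Gfr) as [F [GF HF]].
      pose proof (HD F GF) as DF.
      assert (HFx : forall x, I01 x -> F x = iter m gl (fr x)).
      { intros x Ix. rewrite HF, Hgm; auto. apply D_pres; auto. }
      assert (HFc : F c > c).
      { rewrite HFx by auto. fold y0.
        pose proof (iter_inv (fun x => c < x < b) gl m y0 Hglin Hy0). lra. }
      assert (HFy : F y0 < y0).
      { rewrite HFx by auto. fold z. lra. }
      destruct (first_fixed F c y0 ltac:(lra)) as [b' [Hb' [Eb' Hb'2]]]; auto.
      { apply cont01_on; [apply D_cont; auto| lra| unfold I01 in Iy0; lra]. }
      apply (core G c b' F gl (conj He (conj Hcomp Hinv)) HD Hnh); auto; try lra.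
      intros x Hx. apply Hgl; lra.
  - assert (Hca : c <= a).
    { apply Rnot_lt_le. intro Hlt. apply H1. lra. }
    destruct Hca as [Hca|Hca].
    +
      apply (core G a d gr fl HG HD Hnh); auto; try lra.
      * intros x Hx. apply Hgr; lra.
      * intros x Hx. apply Hfl; lra.
    +
      subst c.
      assert (Id : I01 d) by (unfold I01; lra). assert (Ia : I01 a) by (unfold I01; lra).
      set (y0 := fl d).
      assert (Hy0 : a < y0 < d).
      { unfold y0. split. rewrite <- Efla at 1. apply D_mono; auto; lra. apply Hfl; lra. }
      set (z := fl y0).
      assert (Iy0 : I01 y0) by (unfold I01; lra).
      assert (Hz : a < z < y0).
      { unfold z. split. rewrite <- Efla at 1. apply D_mono; auto; lra. apply Hfl; lra. }
      assert (Hgrin : forall x, a < x < d -> a < gr x < d).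
      { intros x Hx. split. pose proof (Hgr x Hx); lra.
        rewrite <- Egrb. apply D_mono; auto; unfold I01; lra. }
      destruct (orbit_right gr z d ltac:(lra)) with (eta := d - y0) as [m Hm].
      { intros x Hx. destruct (Req_dec x d) as [->|Hne]. rewrite Egrb; lra.
        pose proof (Hgrin x ltac:(lra)). pose proof (Hgr x ltac:(lra)). lra. }
      { apply cont01_on; [apply D_cont; auto| lra| lra]. }
      { intros x Hx. apply Hgr; lra. }
      { lra. }
      destruct (iter_G G gr m HG Ggr Dgr) as [gm [Ggm Hgm]].
      destruct HG as [He [Hcomp Hinv]].
      destruct (Hcomp gm fl Ggm Gfl) as [Gg2 [GG2 HG2]].
      pose proof (HD Gg2 GG2) as DG2.
      assert (HGx : forall x, I01 x -> Gg2 x = iter m gr (fl x)).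
      { intros x Ix. rewrite HG2, Hgm; auto. apply D_pres; auto. }
      assert (HGd : Gg2 d < d).
      { rewrite HGx by auto. fold y0.
        pose proof (iter_inv (fun x => a < x < d) gr m y0 Hgrin Hy0). lra. }
      assert (HGy : Gg2 y0 > y0).
      { rewrite HGx by auto. fold z. lra. }
      destruct (last_fixed Gg2 y0 d ltac:(lra)) as [c' [Hc' [Ec' Hc'2]]]; auto.
      { apply cont01_on; [apply D_cont; auto| unfold I01 in Iy0; lra| lra]. }
      apply (core G c' d gr Gg2 (conj He (conj Hcomp Hinv)) HD Hnh); auto; try lra.
      intros x Hx. apply Hgr; lra.
Qed.

Theorem theoremt (G : (R -> R) -> Prop) :
  is_group01 G ->
  (forall g, G g -> Diff1plus g) ->
  no_hyperbolic_fixed G ->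
  no_linked_fixed G.
Proof.
  intros HG HD Hnh a b c d H1 H2 [E|E].
  - apply (one_side G a b c d); auto.
  - apply (one_side G c d a b); auto.
Qed.
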